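(* Let $(H,p)$ be a pivotal Hopf monoid in a symmetric monoidal category $\mathcal C$, $\Gamma$ a directed ribbon graph with edge set $E$ and $\alpha\in E$. Then: 1. $(H^{\otimes E},\rhd_{\alpha+},\delta_{\alpha+})$ and $(H^{\otimes E},\rhd_{\alpha-},\delta_{\alpha-})$ are left-left $H$-Hopf modules, i.e. $\delta\circ\rhd=(m\otimes\rhd)\circ(1_H\otimes\tau_{H,H}\otimes1_{H^{\otimes E}})\circ(\Delta\otimes\delta)$ for $(\rhd,\delta)=(\rhd_{\alpha\pm},\delta_{\alpha\pm})$; 2. $\rhd_{\alpha-}\circ(1_H\otimes\rhd_{\alpha+})=\rhd_{\alpha+}\circ(1_H\otimes\rhd_{\alpha-})\circ(\tau_{H,H}\otimes1_{H^{\otimes E}})$ and $(1_H\otimes\delta_{\alpha-})\circ\delta_{\alpha+}=(\tau_{H,H}\otimes1_{H^{\otimes E}})\circ(1_H\otimes\delta_{\alpha+})\circ\delta_{\alpha-}$.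
   Context: $\mathcal C$ symmetric monoidal (unit $e$, symmetry $\tau$); $H$ a Hopf monoid ($m,\eta,\Delta,\epsilon,S$); pivotal: $p:e\to H$ with $\Delta\circ p=p\otimes p$, $\epsilon\circ p=1_e$, $m\circ(m\otimes1)\circ(1\otimes S^2\otimes S)\circ(p\otimes1\otimes p)=1_H$; $T:=m\circ(p\otimes S)$. Sweedler notation is shorthand for composites in $\mathcal C$. A directed ribbon graph is a finite directed graph with edge set $E$ (plus cyclic orderings at vertices). $H^{\otimes E}$ is the tensor product of copies of $H$ indexed by $E$ (the copy of $\alpha$ being its label). For $\alpha\in E$ with label $a$ (other labels unchanged): $\rhd_{\alpha+}:H\otimes H^{\otimes E}\to H^{\otimes E}$, $h\otimes(\dots a\dots)\mapsto(\dots ha\dots)$; $\rhd_{\alpha-}$: $a\mapsto T(hT(a))$; $\delta_{\alpha+}:H^{\otimes E}\to H\otimes H^{\otimes E}$, $(\dots a\dots)\mapsto a_{(1)}\otimes(\dots a_{(2)}\dots)$; $\delta_{\alpha-}$: $(\dots a\dots)\mapsto T(a)_{(1)}\otimes(\dots T(T(a)_{(2)})\dots)$. *)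

(* Defs.v *)
Set Implicit Arguments.
Unset Strict Implicit.

Record SymMonCat := {
  Ob : Type;
  Hom : Ob -> Ob -> Type;
  idm : forall A, Hom A A;
  comp : forall A B C, Hom B C -> Hom A B -> Hom A C;
  tens : Ob -> Ob -> Ob;
  tensm : forall A B C D, Hom A B -> Hom C D -> Hom (tens A C) (tens B D);
  unitob : Ob;
  assoc : forall A B C, Hom (tens (tens A B) C) (tens A (tens B C));
  assoc_inv : forall A B C, Hom (tens A (tens B C)) (tens (tens A B) C);
  lu : forall A, Hom (tens unitob A) A;
  lu_inv : forall A, Hom A (tens unitob A);
  ru : forall A, Hom (tens A unitob) A;
  ru_inv : forall A, Hom A (tens A unitob);
  sym : forall A B, Hom (tens A B) (tens B A);
  comp_idl : forall A B (f : Hom A B), comp (idm B) f = f;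
  comp_idr : forall A B (f : Hom A B), comp f (idm A) = f;
  comp_assoc : forall A B C D (f : Hom A B) (g : Hom B C) (h : Hom C D),
      comp h (comp g f) = comp (comp h g) f;
  tens_id : forall A B, tensm (idm A) (idm B) = idm (tens A B);
  tens_comp : forall A B C A' B' C' (f : Hom A B) (g : Hom B C)
      (f' : Hom A' B') (g' : Hom B' C'),
      tensm (comp g f) (comp g' f') = comp (tensm g g') (tensm f f');
  assoc_nat : forall A B C A' B' C' (f : Hom A A') (g : Hom B B') (h : Hom C C'),
      comp (assoc A' B' C') (tensm (tensm f g) h)
      = comp (tensm f (tensm g h)) (assoc A B C);
  assoc_iso1 : forall A B C, comp (assoc_inv A B C) (assoc A B C) = idm _;
  assoc_iso2 : forall A B C, comp (assoc A B C) (assoc_inv A B C) = idm _;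
  lu_nat : forall A B (f : Hom A B),
      comp (lu B) (tensm (idm unitob) f) = comp f (lu A);
  lu_iso1 : forall A, comp (lu_inv A) (lu A) = idm _;
  lu_iso2 : forall A, comp (lu A) (lu_inv A) = idm _;
  ru_nat : forall A B (f : Hom A B),
      comp (ru B) (tensm f (idm unitob)) = comp f (ru A);
  ru_iso1 : forall A, comp (ru_inv A) (ru A) = idm _;
  ru_iso2 : forall A, comp (ru A) (ru_inv A) = idm _;
  sym_nat : forall A B A' B' (f : Hom A A') (g : Hom B B'),
      comp (sym A' B') (tensm f g) = comp (tensm g f) (sym A B);
  sym_inv : forall A B, comp (sym B A) (sym A B) = idm _;
  pentagon : forall A B C D,
      comp (assoc A B (tens C D)) (assoc (tens A B) C D)
      = comp (tensm (idm A) (assoc B C D))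
          (comp (assoc A (tens B C) D) (tensm (assoc A B C) (idm D)));
  triangle : forall A B,
      comp (tensm (idm A) (lu B)) (assoc A unitob B) = tensm (ru A) (idm B);
  hexagon : forall A B C,
      comp (assoc B C A) (comp (sym A (tens B C)) (assoc A B C))
      = comp (tensm (idm B) (sym A C))
          (comp (assoc B A C) (tensm (sym A B) (idm C)))
}.

Arguments idm {s} A.
Arguments comp {s A B C} _ _.
Arguments tens {s} _ _.
Arguments tensm {s A B C D} _ _.
Arguments unitob {s}.
Arguments assoc {s} A B C.
Arguments assoc_inv {s} A B C.
Arguments lu {s} A.
Arguments lu_inv {s} A.
Arguments ru {s} A.
Arguments ru_inv {s} A.
Arguments sym {s} A B.

Section HopfDefs.
Context {C : SymMonCat}.

Notation "g \o f" := (comp g f) (at level 40, left associativity).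
Notation "A * B" := (tens A B).

(* (A⊗B)⊗(C⊗D) -> (A⊗C)⊗(B⊗D), i.e. 1 ⊗ τ_{B,C} ⊗ 1 *)
Definition middle_swap (A B C' D : Ob C) :
    Hom ((A * B) * (C' * D)) ((A * C') * (B * D)) :=
  assoc_inv A C' (B * D)
  \o tensm (idm A) (assoc C' B D \o tensm (sym B C') (idm D) \o assoc_inv B C' D)
  \o assoc A B (C' * D).

Record HopfMonoid (H : Ob C) := {
  mul : Hom (H * H) H;
  unt : Hom unitob H;
  comul : Hom H (H * H);
  counit : Hom H unitob;
  antipode : Hom H H;
  mul_assoc : mul \o tensm mul (idm H) = mul \o tensm (idm H) mul \o assoc H H H;
  mul_unitl : mul \o tensm unt (idm H) = lu H;
  mul_unitr : mul \o tensm (idm H) unt = ru H;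
  comul_coassoc : assoc H H H \o tensm comul (idm H) \o comul
                  = tensm (idm H) comul \o comul;
  comul_counitl : lu H \o tensm counit (idm H) \o comul = idm H;
  comul_counitr : ru H \o tensm (idm H) counit \o comul = idm H;
  bialg_mul : comul \o mul = tensm mul mul \o middle_swap H H H H \o tensm comul comul;
  bialg_counit_mul : counit \o mul = lu unitob \o tensm counit counit;
  bialg_comul_unit : comul \o unt = tensm unt unt \o lu_inv unitob;
  bialg_counit_unit : counit \o unt = idm unitob;
  antipode_l : mul \o tensm antipode (idm H) \o comul = unt \o counit;
  antipode_r : mul \o tensm (idm H) antipode \o comul = unt \o counit
}.

Context {H : Ob C} (hs : HopfMonoid H).

Notation m := (mul hs).
Notation eta := (unt hs).
Notation Dl := (comul hs).
Notation eps := (counit hs).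
Notation Sa := (antipode hs).

Definition is_pivotal (p : Hom unitob H) : Prop :=
  Dl \o p = tensm p p \o lu_inv unitob /\
  eps \o p = idm unitob /\
  m \o tensm m (idm H) \o tensm (tensm (idm H) (Sa \o Sa)) Sa
    \o tensm (tensm p (idm H)) p \o tensm (lu_inv H) (idm unitob) \o ru_inv H
  = idm H.

Definition Tmap (p : Hom unitob H) : Hom H H := m \o tensm p Sa \o lu_inv H.

(* H^{⊗E} for E = {0,...,n-1}: H ⊗ (H ⊗ (... ⊗ e)) *)
Fixpoint Hpow (n : nat) : Ob C :=
  match n with 0 => unitob | S n' => H * Hpow n' end.

(* apply a local action g : H ⊗ H -> H to the k-th tensor factor *)
Fixpoint act_at (g : Hom (H * H) H) (n k : nat) : Hom (H * Hpow n) (Hpow n) :=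
  match n return Hom (H * Hpow n) (Hpow n) with
  | 0 => lu unitob \o tensm eps (idm unitob)   (* junk: k < n excluded *)
  | S n' =>
    match k with
    | 0 => tensm g (idm (Hpow n')) \o assoc_inv H H (Hpow n')
    | S k' => tensm (idm H) (act_at g n' k') \o assoc H H (Hpow n')
              \o tensm (sym H H) (idm (Hpow n')) \o assoc_inv H H (Hpow n')
    end
  end.

(* apply a local coaction g : H -> H ⊗ H to the k-th tensor factor,
   the first output leg being brought to the front *)
Fixpoint coact_at (g : Hom H (H * H)) (n k : nat) : Hom (Hpow n) (H * Hpow n) :=
  match n return Hom (Hpow n) (H * Hpow n) with
  | 0 => tensm eta (idm unitob) \o lu_inv unitob   (* junk: k < n excluded *)
  | S n' =>
    match k with
    | 0 => assoc H H (Hpow n') \o tensm g (idm (Hpow n'))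
    | S k' => assoc H H (Hpow n') \o tensm (sym H H) (idm (Hpow n'))
              \o assoc_inv H H (Hpow n') \o tensm (idm H) (coact_at g n' k')
    end
  end.

(* ▷_{α+}: a ↦ h a ;  ▷_{α-}: a ↦ T(h T(a)) *)
Definition act_plus (n k : nat) := act_at m n k.
Definition act_minus (p : Hom unitob H) (n k : nat) :=
  act_at (Tmap p \o m \o tensm (idm H) (Tmap p)) n k.
(* δ_{α+}: a ↦ a(1) ⊗ a(2) ;  δ_{α-}: a ↦ T(a)(1) ⊗ T(T(a)(2)) *)
Definition coact_plus (n k : nat) := coact_at Dl n k.
Definition coact_minus (p : Hom unitob H) (n k : nat) :=
  coact_at (tensm (idm H) (Tmap p) \o Dl \o Tmap p) n k.

Definition is_hopf_module (M : Ob C) (act : Hom (H * M) M) (coact : Hom M (H * M))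
  : Prop :=
  act \o tensm m (idm M) = act \o tensm (idm H) act \o assoc H H M /\
  act \o tensm eta (idm M) = lu M /\
  tensm Dl (idm M) \o coact = assoc_inv H H M \o tensm (idm H) coact \o coact /\
  tensm eps (idm M) \o coact = lu_inv M /\
  coact \o act = tensm m act \o middle_swap H H H M \o tensm Dl coact.

End HopfDefs.

(* Main.v *)
Require Import Defs.
From Stdlib Require Import Setoid Lia.
Set Implicit Arguments.

Section A.
Context {C : SymMonCat}.
Local Notation "g \o f" := (comp g f) (at level 40, left associativity).
Local Notation "f ⊗ g" := (tensm f g) (at level 35).
Local Notation I := (@unitob C).

Ltac nm := repeat rewrite <- comp_assoc; repeat rewrite comp_idl.

Lemma tl_comp {A B D : Ob C} (X : Ob C) (f : Hom A B) (g : Hom B D) :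
  tensm (g \o f) (idm X) = tensm g (idm X) \o tensm f (idm X).
Proof. rewrite <- tens_comp, comp_idl. reflexivity. Qed.
Lemma tr_comp {A B D : Ob C} (X : Ob C) (f : Hom A B) (g : Hom B D) :
  tensm (idm X) (g \o f) = tensm (idm X) g \o tensm (idm X) f.
Proof. rewrite <- tens_comp, comp_idl. reflexivity. Qed.

Lemma cancel_r {X Y Z : Ob C} (f g : Hom Y Z) (q : Hom X Y) (qi : Hom Y X) :
  q \o qi = idm _ -> f \o q = g \o q -> f = g.
Proof. intros E H. rewrite <- (comp_idr f), <- (comp_idr g), <- E, !comp_assoc, H. reflexivity. Qed.
Lemma cancel_l {X Y Z : Ob C} (f g : Hom X Y) (q : Hom Y Z) (qi : Hom Z Y) :
  qi \o q = idm _ -> q \o f = q \o g -> f = g.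
Proof. intros E H. rewrite <- (comp_idl f), <- (comp_idl g), <- E, <- !comp_assoc, H. reflexivity. Qed.

Lemma ai_a {A B D W : Ob C} (x : Hom W _) : assoc_inv A B D \o (assoc A B D \o x) = x.
Proof. rewrite comp_assoc, assoc_iso1, comp_idl. reflexivity. Qed.
Lemma a_ai {A B D W : Ob C} (x : Hom W _) : assoc A B D \o (assoc_inv A B D \o x) = x.
Proof. rewrite comp_assoc, assoc_iso2, comp_idl. reflexivity. Qed.
Lemma lui_lu {A W : Ob C} (x : Hom W _) : lu_inv A \o (lu A \o x) = x.
Proof. rewrite comp_assoc, lu_iso1, comp_idl. reflexivity. Qed.
Lemma lu_lui {A W : Ob C} (x : Hom W _) : lu A \o (lu_inv A \o x) = x.
Proof. rewrite comp_assoc, lu_iso2, comp_idl. reflexivity. Qed.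
Lemma rui_ru {A W : Ob C} (x : Hom W _) : ru_inv A \o (ru A \o x) = x.
Proof. rewrite comp_assoc, ru_iso1, comp_idl. reflexivity. Qed.
Lemma ru_rui {A W : Ob C} (x : Hom W _) : ru A \o (ru_inv A \o x) = x.
Proof. rewrite comp_assoc, ru_iso2, comp_idl. reflexivity. Qed.
Lemma ss {A B W : Ob C} (x : Hom W _) : sym B A \o (sym A B \o x) = x.
Proof. rewrite comp_assoc, sym_inv, comp_idl. reflexivity. Qed.
Lemma tc {A B D A' B' D' W : Ob C} (f : Hom A B) (g : Hom B D) (f' : Hom A' B') (g' : Hom B' D') (x : Hom W _) :
  tensm g g' \o (tensm f f' \o x) = tensm (g \o f) (g' \o f') \o x.
Proof. rewrite tens_comp, comp_assoc. reflexivity. Qed.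
Lemma tc_l {A B D X W : Ob C} (f : Hom A B) (g : Hom B D) (x : Hom W _) :
  tensm g (idm X) \o (tensm f (idm X) \o x) = tensm (g \o f) (idm X) \o x.
Proof. rewrite tc, comp_idl. reflexivity. Qed.
Lemma tc_r {A B D X W : Ob C} (f : Hom A B) (g : Hom B D) (x : Hom W _) :
  tensm (idm X) g \o (tensm (idm X) f \o x) = tensm (idm X) (g \o f) \o x.
Proof. rewrite tc, comp_idl. reflexivity. Qed.
Lemma xch {A B A' B' W : Ob C} (f : Hom A B) (g : Hom A' B') (x : Hom W _) :
  tensm f (idm _) \o (tensm (idm _) g \o x) = tensm (idm _) g \o (tensm f (idm _) \o x).
Proof. rewrite !tc, !comp_idl, !comp_idr. reflexivity. Qed.
Lemma tsplit {A B A' B' : Ob C} (f : Hom A B) (g : Hom A' B') :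
  tensm f g = tensm f (idm _) \o tensm (idm _) g.
Proof. rewrite <- tens_comp, comp_idl, comp_idr. reflexivity. Qed.

Lemma a_nat {A B D A' B' D' W : Ob C} (f : Hom A A') (g : Hom B B') (h : Hom D D') (x : Hom W _) :
  assoc A' B' D' \o (tensm (tensm f g) h \o x) = tensm f (tensm g h) \o (assoc A B D \o x).
Proof. rewrite !comp_assoc, assoc_nat. reflexivity. Qed.
Lemma ai_nat {A B D A' B' D' W : Ob C} (f : Hom A A') (g : Hom B B') (h : Hom D D') (x : Hom W _) :
  assoc_inv A' B' D' \o (tensm f (tensm g h) \o x) = tensm (tensm f g) h \o (assoc_inv A B D \o x).
Proof.
  rewrite <- (ai_a (tensm (tensm f g) h \o (assoc_inv A B D \o x))).
  rewrite (a_nat f g h). rewrite a_ai. reflexivity.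
Qed.
Lemma lu_nat_x {A B W : Ob C} (f : Hom A B) (x : Hom W _) :
  lu B \o (tensm (idm _) f \o x) = f \o (lu A \o x).
Proof. rewrite !comp_assoc, lu_nat. reflexivity. Qed.
Lemma lui_nat {A B W : Ob C} (f : Hom A B) (x : Hom W _) :
  lu_inv B \o (f \o x) = tensm (idm _) f \o (lu_inv A \o x).
Proof.
  rewrite <- (lui_lu (tensm (idm _) f \o (lu_inv A \o x))).
  rewrite lu_nat_x, lu_lui. reflexivity.
Qed.
Lemma ru_nat_x {A B W : Ob C} (f : Hom A B) (x : Hom W _) :
  ru B \o (tensm f (idm _) \o x) = f \o (ru A \o x).
Proof. rewrite !comp_assoc, ru_nat. reflexivity. Qed.
Lemma rui_nat {A B W : Ob C} (f : Hom A B) (x : Hom W _) :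
  ru_inv B \o (f \o x) = tensm f (idm _) \o (ru_inv A \o x).
Proof.
  rewrite <- (rui_ru (tensm f (idm _) \o (ru_inv A \o x))).
  rewrite ru_nat_x, ru_rui. reflexivity.
Qed.
Lemma sym_nat_x {A B A' B' W : Ob C} (f : Hom A A') (g : Hom B B') (x : Hom W _) :
  sym A' B' \o (tensm f g \o x) = tensm g f \o (sym A B \o x).
Proof. rewrite !comp_assoc, sym_nat. reflexivity. Qed.

Lemma tensI_cancel {A B : Ob C} (f g : Hom A B) :
  tensm (idm I) f = tensm (idm I) g -> f = g.
Proof.
  intro E. rewrite <- (comp_idr f), <- (comp_idr g), <- (lu_iso2 A).
  rewrite !comp_assoc, <- !lu_nat, E. reflexivity.
Qed.
Lemma tensI_cancel_r {A B : Ob C} (f g : Hom A B) :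
  tensm f (idm I) = tensm g (idm I) -> f = g.
Proof.
  intro E. rewrite <- (comp_idr f), <- (comp_idr g), <- (ru_iso2 A).
  rewrite !comp_assoc, <- !ru_nat, E. reflexivity.
Qed.

Lemma pent_x {A B D E W : Ob C} (x : Hom W _) :
  assoc A B (tens D E) \o (assoc (tens A B) D E \o x)
  = tensm (idm A) (assoc B D E) \o (assoc A (tens B D) E \o (tensm (assoc A B D) (idm E) \o x)).
Proof. rewrite comp_assoc, pentagon. nm. reflexivity. Qed.

Lemma tri_x {A B W : Ob C} (x : Hom W _) :
  tensm (idm A) (lu B) \o (assoc A I B \o x) = tensm (ru A) (idm B) \o x.
Proof. rewrite comp_assoc, triangle. reflexivity. Qed.

Lemma add_id {X Y : Ob C} (f g : Hom X Y) : f \o idm X = g \o idm X -> f = g.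
Proof. rewrite !comp_idr. auto. Qed.

Lemma K1 (A B : Ob C) : lu (tens A B) \o assoc I A B = tensm (lu A) (idm B).
Proof.
  apply tensI_cancel.
  apply (@cancel_r _ _ _ _ _ (assoc I (tens I A) B \o tensm (assoc I I A) (idm B))
            (tensm (assoc_inv I I A) (idm B) \o assoc_inv I (tens I A) B)).
  { nm. rewrite tc_l, assoc_iso2, tens_id, comp_idl, assoc_iso2. reflexivity. }
  apply add_id. nm. rewrite tr_comp. nm. rewrite <- pent_x.
  rewrite tri_x. rewrite <- (tens_id A B). rewrite <- a_nat.
  rewrite <- triangle, tl_comp. nm. rewrite a_nat. reflexivity.
Qed.

Lemma K1_x {A B W : Ob C} (x : Hom W _) : lu (tens A B) \o (assoc I A B \o x) = tensm (lu A) (idm B) \o x.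
Proof. rewrite comp_assoc, K1. reflexivity. Qed.
Lemma hex_x {A B D W : Ob C} (x : Hom W _) :
  assoc B D A \o (sym A (tens B D) \o (assoc A B D \o x))
  = tensm (idm B) (sym A D) \o (assoc B A D \o (tensm (sym A B) (idm D) \o x)).
Proof. rewrite !comp_assoc, <- (comp_assoc _ (sym _ _)), hexagon. nm. reflexivity. Qed.

Lemma JS (A : Ob C) : lu A \o sym A I = ru A.
Proof.
  apply tensI_cancel_r.
  apply (@cancel_l _ _ _ _ _ (sym A I) (sym I A)). { apply sym_inv. }
  apply add_id. nm. rewrite tl_comp. nm.
  rewrite <- K1. nm. rewrite <- lu_nat_x. rewrite <- hex_x. rewrite K1_x.
  rewrite <- sym_nat_x. rewrite tri_x. reflexivity.
Qed.

Lemma tl_iso_a {A B D E W : Ob C} (x : Hom W _) :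
  tensm (assoc A B D) (idm E) \o (tensm (assoc_inv A B D) (idm E) \o x) = x.
Proof. rewrite tc_l, assoc_iso2, tens_id, comp_idl. reflexivity. Qed.
Lemma tl_iso_ai {A B D E W : Ob C} (x : Hom W _) :
  tensm (assoc_inv A B D) (idm E) \o (tensm (assoc A B D) (idm E) \o x) = x.
Proof. rewrite tc_l, assoc_iso1, tens_id, comp_idl. reflexivity. Qed.
Lemma tr_iso_a {A B D E W : Ob C} (x : Hom W _) :
  tensm (idm E) (assoc A B D) \o (tensm (idm E) (assoc_inv A B D) \o x) = x.
Proof. rewrite tc_r, assoc_iso2, tens_id, comp_idl. reflexivity. Qed.
Lemma tr_iso_ai {A B D E W : Ob C} (x : Hom W _) :
  tensm (idm E) (assoc_inv A B D) \o (tensm (idm E) (assoc A B D) \o x) = x.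
Proof. rewrite tc_r, assoc_iso1, tens_id, comp_idl. reflexivity. Qed.

Lemma pV1 {A B D E W : Ob C} (x : Hom W _) :
  assoc A B (tens D E) \o (assoc (tens A B) D E \o (tensm (assoc_inv A B D) (idm E) \o x))
  = tensm (idm A) (assoc B D E) \o (assoc A (tens B D) E \o x).
Proof. rewrite pent_x, tl_iso_a. reflexivity. Qed.
Lemma pV2 {A B D E W : Ob C} (x : Hom W _) :
  assoc A (tens B D) E \o (tensm (assoc A B D) (idm E) \o x)
  = tensm (idm A) (assoc_inv B D E) \o (assoc A B (tens D E) \o (assoc (tens A B) D E \o x)).
Proof. rewrite pent_x, tr_iso_ai. reflexivity. Qed.
Lemma pV3 {A B D E W : Ob C} (x : Hom W _) :
  assoc (tens A B) D E \o (tensm (assoc_inv A B D) (idm E) \o (assoc_inv A (tens B D) E \o x))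
  = assoc_inv A B (tens D E) \o (tensm (idm A) (assoc B D E) \o x).
Proof.
  rewrite <- (ai_a (A:=A) (B:=B) (D:=tens D E) (assoc (tens A B) D E \o _)).
  rewrite pV1, a_ai. reflexivity.
Qed.
Lemma hex_sym (X Y Z : Ob C) :
  sym X (tens Y Z) = assoc_inv Y Z X \o (tensm (idm Y) (sym X Z) \o (assoc Y X Z \o
     (tensm (sym X Y) (idm Z) \o assoc_inv X Y Z))).
Proof.
  apply add_id. nm.
  rewrite <- (ai_a (A:=Y) (B:=Z) (D:=X) (sym X _ \o _)).
  rewrite <- (a_ai (A:=X) (B:=Y) (D:=Z) (idm _)) at 1.
  rewrite hex_x. reflexivity.
Qed.

Definition pass (X Y M : Ob C) : Hom (tens X (tens Y M)) (tens Y (tens X M)) :=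
  assoc Y X M \o (tensm (sym X Y) (idm M) \o assoc_inv X Y M).

Lemma pass_inv {X Y M W : Ob C} (x : Hom W _) : pass Y X M \o (pass X Y M \o x) = x.
Proof. unfold pass. nm. rewrite ai_a, tc_l, sym_inv, tens_id, comp_idl, a_ai. reflexivity. Qed.

Lemma pass_nat {X Y M X' Y' M' W : Ob C} (f : Hom X X') (g : Hom Y Y') (h : Hom M M') (x : Hom W _) :
  pass X' Y' M' \o (tensm f (tensm g h) \o x) = tensm g (tensm f h) \o (pass X Y M \o x).
Proof.
  unfold pass. nm. rewrite ai_nat. rewrite tc, comp_idl, sym_nat, <- (comp_idr h), <- tc, comp_idr.
  rewrite a_nat. reflexivity.
Qed.

Lemma hex2 {X Y Z M W : Ob C} (x : Hom W _) :
  assoc Y Z (tens X M) \o (pass X (tens Y Z) M \o x)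
  = tensm (idm Y) (pass X Z M) \o (pass X Y (tens Z M) \o (tensm (idm X) (assoc Y Z M) \o x)).
Proof.
  unfold pass. rewrite (hex_sym X Y Z). rewrite !tl_comp, !tr_comp. nm.
  rewrite pV1. rewrite a_nat. rewrite pV2. rewrite a_nat. rewrite pV3. rewrite tens_id. reflexivity.
Qed.

Lemma pass_inv0 {X Y M : Ob C} : pass Y X M \o pass X Y M = idm _.
Proof. rewrite <- (comp_idr (pass X Y M)), pass_inv. reflexivity. Qed.
Lemma tr_pass_inv {E X Y M W : Ob C} (x : Hom W _) :
  tensm (idm E) (pass Y X M) \o (tensm (idm E) (pass X Y M) \o x) = x.
Proof. rewrite tc_r, pass_inv0, tens_id, comp_idl. reflexivity. Qed.

Ltac cx := repeat first [ rewrite ai_a | rewrite a_ai | rewrite lui_lu | rewrite lu_lui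
  | rewrite rui_ru | rewrite ru_rui | rewrite ss | rewrite pass_inv | rewrite tl_iso_a
  | rewrite tl_iso_ai | rewrite tr_iso_a | rewrite tr_iso_ai | rewrite tr_pass_inv ].

Lemma hex1_0 {X Y A M : Ob C} :
  pass (tens X Y) A M \o assoc_inv X Y (tens A M)
  = tensm (idm A) (assoc_inv X Y M) \o (pass X A (tens Y M) \o tensm (idm X) (pass Y A M)).
Proof.
  apply (@cancel_r _ _ _ _ _ (assoc X Y (tens A M) \o pass A (tens X Y) M)
      (pass (tens X Y) A M \o assoc_inv X Y (tens A M))).
  { apply add_id. nm. cx. reflexivity. }
  apply add_id. nm. cx. rewrite hex2. cx. reflexivity.
Qed.
Lemma hex1 {X Y A M W : Ob C} (x : Hom W _) :
  pass (tens X Y) A M \o (assoc_inv X Y (tens A M) \o x)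
  = tensm (idm A) (assoc_inv X Y M) \o (pass X A (tens Y M) \o (tensm (idm X) (pass Y A M) \o x)).
Proof. rewrite comp_assoc, hex1_0. nm. reflexivity. Qed.

Lemma lui_sym (A : Ob C) : sym A I \o ru_inv A = lu_inv A.
Proof.
  apply (@cancel_l _ _ _ _ _ (lu A) (lu_inv A)). { apply lu_iso1. }
  rewrite comp_assoc, JS, ru_iso2, lu_iso2. reflexivity.
Qed.
Lemma tl_lu_iso {A B W : Ob C} (x : Hom W _) : tensm (lu A) (idm B) \o (tensm (lu_inv A) (idm B) \o x) = x.
Proof. rewrite tc_l, lu_iso2, tens_id, comp_idl. reflexivity. Qed.
Lemma tl_lui_iso {A B W : Ob C} (x : Hom W _) : tensm (lu_inv A) (idm B) \o (tensm (lu A) (idm B) \o x) = x.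
Proof. rewrite tc_l, lu_iso1, tens_id, comp_idl. reflexivity. Qed.
Lemma tr_lu_iso {A B W : Ob C} (x : Hom W _) : tensm (idm B) (lu A) \o (tensm (idm B) (lu_inv A) \o x) = x.
Proof. rewrite tc_r, lu_iso2, tens_id, comp_idl. reflexivity. Qed.
Lemma tr_lui_iso {A B W : Ob C} (x : Hom W _) : tensm (idm B) (lu_inv A) \o (tensm (idm B) (lu A) \o x) = x.
Proof. rewrite tc_r, lu_iso1, tens_id, comp_idl. reflexivity. Qed.
Lemma tl_ru_iso {A B W : Ob C} (x : Hom W _) : tensm (ru A) (idm B) \o (tensm (ru_inv A) (idm B) \o x) = x.
Proof. rewrite tc_l, ru_iso2, tens_id, comp_idl. reflexivity. Qed.
Lemma tl_rui_iso {A B W : Ob C} (x : Hom W _) : tensm (ru_inv A) (idm B) \o (tensm (ru A) (idm B) \o x) = x.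
Proof. rewrite tc_l, ru_iso1, tens_id, comp_idl. reflexivity. Qed.

Ltac cx2 := repeat first [ rewrite ai_a | rewrite a_ai | rewrite lui_lu | rewrite lu_lui
  | rewrite rui_ru | rewrite ru_rui | rewrite ss | rewrite pass_inv | rewrite tl_iso_a
  | rewrite tl_iso_ai | rewrite tr_iso_a | rewrite tr_iso_ai | rewrite tr_pass_inv
  | rewrite tl_lu_iso | rewrite tl_lui_iso | rewrite tr_lu_iso | rewrite tr_lui_iso
  | rewrite tl_ru_iso | rewrite tl_rui_iso ].

Lemma tri_inv_x {A B W : Ob C} (x : Hom W _) :
  assoc_inv A I B \o (tensm (idm A) (lu_inv B) \o x) = tensm (ru_inv A) (idm B) \o x.
Proof.
  apply (@cancel_l _ _ _ _ _ (tensm (ru A) (idm B)) (tensm (ru_inv A) (idm B))).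
  { rewrite <- tens_comp, ru_iso1, comp_idl, tens_id. reflexivity. }
  rewrite <- triangle at 1. nm. cx2. reflexivity.
Qed.
Lemma K1inv_x {A B W : Ob C} (x : Hom W _) :
  assoc I A B \o (tensm (lu_inv A) (idm B) \o x) = lu_inv (tens A B) \o x.
Proof.
  apply (@cancel_l _ _ _ _ _ (lu (tens A B)) (lu_inv (tens A B))). { apply lu_iso1. }
  rewrite K1_x. cx2. reflexivity.
Qed.
Lemma PU {X M W : Ob C} (x : Hom W _) :
  pass X I M \o (tensm (idm X) (lu_inv M) \o x) = lu_inv (tens X M) \o x.
Proof.
  unfold pass. nm. rewrite tri_inv_x, tc_l, lui_sym, K1inv_x. reflexivity.
Qed.
Lemma PU' {X M W : Ob C} (x : Hom W _) :
  lu (tens X M) \o (pass X I M \o x) = tensm (idm X) (lu M) \o x.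
Proof.
  rewrite <- (tr_lui_iso (A:=M) (B:=X) x) at 1. rewrite PU. cx2. reflexivity.
Qed.
Lemma PU2 {X M W : Ob C} (x : Hom W _) :
  pass I X M \o (lu_inv (tens X M) \o x) = tensm (idm X) (lu_inv M) \o x.
Proof. rewrite <- PU. cx2. reflexivity. Qed.
Lemma PU2' {X M W : Ob C} (x : Hom W _) :
  tensm (idm X) (lu M) \o (pass I X M \o x) = lu (tens X M) \o x.
Proof. rewrite <- PU'. cx2. reflexivity. Qed.
Lemma pass_def (X Y M : Ob C) : pass X Y M = assoc Y X M \o (tensm (sym X Y) (idm M) \o assoc_inv X Y M).
Proof. reflexivity. Qed.
Lemma hex1' {X Y A M W : Ob C} (x : Hom W _) :
  pass X A (tens Y M) \o (tensm (idm X) (pass Y A M) \o x)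
  = tensm (idm A) (assoc X Y M) \o (pass (tens X Y) A M \o (assoc_inv X Y (tens A M) \o x)).
Proof. rewrite hex1. cx2. reflexivity. Qed.

Lemma YB {X Y Z M W : Ob C} (x : Hom W _) :
  tensm (idm Z) (pass X Y M) \o (pass X Z (tens Y M) \o (tensm (idm X) (pass Y Z M) \o x))
  = pass Y Z (tens X M) \o (tensm (idm Y) (pass X Z M) \o (pass X Y (tens Z M) \o x)).
Proof.
  rewrite hex1'. rewrite hex1'.
  rewrite (pass_def X Y M), (pass_def X Y (tens Z M)). nm. rewrite !tr_comp. nm. cx2.
  rewrite <- pass_nat. rewrite tens_id. cx2.
  rewrite <- (tens_id Z M). reflexivity.
Qed.
End A.

Ltac nm := repeat rewrite <- comp_assoc; repeat rewrite comp_idl.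
Ltac cx2 := repeat first [ rewrite ai_a | rewrite a_ai | rewrite lui_lu | rewrite lu_lui
  | rewrite rui_ru | rewrite ru_rui | rewrite ss | rewrite pass_inv | rewrite tl_iso_a
  | rewrite tl_iso_ai | rewrite tr_iso_a | rewrite tr_iso_ai | rewrite tr_pass_inv
  | rewrite tl_lu_iso | rewrite tl_lui_iso | rewrite tr_lu_iso | rewrite tr_lui_iso
  | rewrite tl_ru_iso | rewrite tl_rui_iso ].

Section B.
Context {C : SymMonCat} {H : Ob C}.
Local Notation "g \o f" := (comp g f) (at level 40, left associativity).
Local Notation I := (@unitob C).
Local Notation "⟪ f ⟫" := (tensm (idm H) f).

Definition mrg (g : Hom (tens H H) H) (M : Ob C) : Hom (tens H (tens H M)) (tens H M) :=
  tensm g (idm M) \o assoc_inv H H M.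
Definition spl (c : Hom H (tens H H)) (M : Ob C) : Hom (tens H M) (tens H (tens H M)) :=
  assoc H H M \o tensm c (idm M).
Definition one (f : Hom H H) (M : Ob C) : Hom (tens H M) (tens H M) := tensm f (idm M).
Definition pt (q : Hom I H) (M : Ob C) : Hom M (tens H M) := tensm q (idm M) \o lu_inv M.
Definition cpt (e : Hom H I) (M : Ob C) : Hom (tens H M) M := lu M \o tensm e (idm M).
Definition sw (M : Ob C) : Hom (tens H (tens H M)) (tens H (tens H M)) := pass H H M.

Lemma mrg_nat g {M M' W : Ob C} (f : Hom M M') (x : Hom W _) :
  mrg g M' \o (⟪⟪f⟫⟫ \o x) = ⟪f⟫ \o (mrg g M \o x).
Proof. unfold mrg. nm. rewrite ai_nat, tens_id, xch. reflexivity. Qed.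
Lemma spl_nat c {M M' W : Ob C} (f : Hom M M') (x : Hom W _) :
  spl c M' \o (⟪f⟫ \o x) = ⟪⟪f⟫⟫ \o (spl c M \o x).
Proof. unfold spl. nm. rewrite xch. rewrite <- (tens_id H H). rewrite a_nat. reflexivity. Qed.
Lemma one_nat s {M M' W : Ob C} (f : Hom M M') (x : Hom W _) :
  one s M' \o (⟪f⟫ \o x) = ⟪f⟫ \o (one s M \o x).
Proof. unfold one. apply xch. Qed.
Lemma pt_nat q {M M' W : Ob C} (f : Hom M M') (x : Hom W _) :
  pt q M' \o (f \o x) = ⟪f⟫ \o (pt q M \o x).
Proof. unfold pt. nm. rewrite lui_nat. rewrite <- (xch q f). reflexivity. Qed.
Lemma cpt_nat e {M M' W : Ob C} (f : Hom M M') (x : Hom W _) :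
  cpt e M' \o (⟪f⟫ \o x) = f \o (cpt e M \o x).
Proof. unfold cpt. nm. rewrite xch. rewrite lu_nat_x. reflexivity. Qed.
Lemma sw_nat {M M' W : Ob C} (f : Hom M M') (x : Hom W _) :
  sw M' \o (⟪⟪f⟫⟫ \o x) = ⟪⟪f⟫⟫ \o (sw M \o x).
Proof. unfold sw. rewrite pass_nat. reflexivity. Qed.

Lemma one_comp (f g : Hom H H) M : one (f \o g) M = one f M \o one g M.
Proof. unfold one. apply tl_comp. Qed.
Lemma one_id M : one (idm H) M = idm _.
Proof. unfold one. apply tens_id. Qed.
Lemma mrg_post (f : Hom H H) g {M W : Ob C} (x : Hom W _) : one f M \o (mrg g M \o x) = mrg (f \o g) M \o x.
Proof. unfold one, mrg. nm. rewrite tc_l. reflexivity. Qed.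
Lemma mrg_pre_l (f : Hom H H) g {M W : Ob C} (x : Hom W _) :
  mrg g M \o (one f (tens H M) \o x) = mrg (g \o tensm f (idm H)) M \o x.
Proof. unfold one, mrg. nm. rewrite <- (tens_id H M). rewrite ai_nat. rewrite tc_l. reflexivity. Qed.
Lemma mrg_pre_r (f : Hom H H) g {M W : Ob C} (x : Hom W _) :
  mrg g M \o (⟪one f M⟫ \o x) = mrg (g \o tensm (idm H) f) M \o x.
Proof. unfold one, mrg. nm. rewrite ai_nat. rewrite tc_l. reflexivity. Qed.
Lemma spl_pre (f : Hom H H) c {M W : Ob C} (x : Hom W _) :
  spl c M \o (one f M \o x) = spl (c \o f) M \o x.
Proof. unfold one, spl. nm. rewrite tc_l. reflexivity. Qed.
Lemma spl_post_l (f : Hom H H) c {M W : Ob C} (x : Hom W _) :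
  one f (tens H M) \o (spl c M \o x) = spl (tensm f (idm H) \o c) M \o x.
Proof. unfold one, spl. nm. rewrite <- (tens_id H M). rewrite <- a_nat. rewrite tc_l. reflexivity. Qed.
Lemma spl_post_r (f : Hom H H) c {M W : Ob C} (x : Hom W _) :
  ⟪one f M⟫ \o (spl c M \o x) = spl (tensm (idm H) f \o c) M \o x.
Proof. unfold one, spl. nm. rewrite <- a_nat. rewrite tc_l. reflexivity. Qed.

Lemma sw_inv {M W : Ob C} (x : Hom W _) : sw M \o (sw M \o x) = x.
Proof. unfold sw. apply pass_inv. Qed.
Lemma w_sw_inv {M W : Ob C} (x : Hom W _) : ⟪sw M⟫ \o (⟪sw M⟫ \o x) = x.
Proof. unfold sw. apply tr_pass_inv. Qed.
Lemma sw_one_l s {M W : Ob C} (x : Hom W _) : sw M \o (one s (tens H M) \o x) = ⟪one s M⟫ \o (sw M \o x).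
Proof. unfold sw, one. rewrite <- (tens_id H M). rewrite pass_nat. reflexivity. Qed.
Lemma sw_one_r s {M W : Ob C} (x : Hom W _) : sw M \o (⟪one s M⟫ \o x) = one s (tens H M) \o (sw M \o x).
Proof. unfold sw, one. rewrite pass_nat. rewrite tens_id. reflexivity. Qed.
Lemma sw_mrg g {M W : Ob C} (x : Hom W _) :
  sw M \o (mrg g (tens H M) \o x) = ⟪mrg g M⟫ \o (sw (tens H M) \o (⟪sw M⟫ \o x)).
Proof. unfold sw, mrg. nm. rewrite <- (tens_id H M). rewrite pass_nat. rewrite hex1.
  rewrite tr_comp. nm. reflexivity. Qed.
Lemma sw_mrg_r g {M W : Ob C} (x : Hom W _) :
  sw M \o (⟪mrg g M⟫ \o x) = mrg g (tens H M) \o (⟪sw M⟫ \o (sw (tens H M) \o x)).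
Proof.
  rewrite <- (sw_inv (M:=M) (mrg g _ \o _)). rewrite sw_mrg.
  rewrite w_sw_inv, sw_inv. reflexivity. Qed.
Lemma spl_sw c {M W : Ob C} (x : Hom W _) :
  spl c (tens H M) \o (sw M \o x) = ⟪sw M⟫ \o (sw (tens H M) \o (⟪spl c M⟫ \o x)).
Proof. unfold sw, spl. nm. rewrite <- (tens_id H M) at 1. rewrite <- pass_nat. rewrite hex2.
  rewrite tr_comp. nm. reflexivity. Qed.
Lemma spl_sw_r c {M W : Ob C} (x : Hom W _) :
  ⟪spl c M⟫ \o (sw M \o x) = sw (tens H M) \o (⟪sw M⟫ \o (spl c (tens H M) \o x)).
Proof.
  rewrite <- (sw_inv (M:=M) x) at 2. rewrite spl_sw. rewrite w_sw_inv, sw_inv. reflexivity. Qed.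
Lemma sw_pt q {M W : Ob C} (x : Hom W _) : sw M \o (⟪pt q M⟫ \o x) = pt q (tens H M) \o x.
Proof. unfold sw, pt. rewrite tr_comp. nm. rewrite pass_nat. rewrite PU. rewrite tens_id. reflexivity. Qed.
Lemma sw_pt2 q {M W : Ob C} (x : Hom W _) : sw M \o (pt q (tens H M) \o x) = ⟪pt q M⟫ \o x.
Proof. rewrite <- sw_pt. apply sw_inv. Qed.
Lemma sw_cpt e {M W : Ob C} (x : Hom W _) : cpt e (tens H M) \o (sw M \o x) = ⟪cpt e M⟫ \o x.
Proof. unfold sw, cpt. rewrite tr_comp. nm. rewrite <- (tens_id H M). rewrite <- pass_nat. rewrite PU'. reflexivity. Qed.
Lemma sw_cpt2 e {M W : Ob C} (x : Hom W _) : ⟪cpt e M⟫ \o (sw M \o x) = cpt e (tens H M) \o x.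
Proof. rewrite <- sw_cpt. rewrite sw_inv. reflexivity. Qed.
Lemma sw_YB {M W : Ob C} (x : Hom W _) :
  ⟪sw M⟫ \o (sw (tens H M) \o (⟪sw M⟫ \o x)) = sw (tens H M) \o (⟪sw M⟫ \o (sw (tens H M) \o x)).
Proof. unfold sw. apply YB. Qed.

End B.

Section C1.
Context {C : SymMonCat}.
Local Notation "g \o f" := (comp g f) (at level 40, left associativity).
Local Notation I := (@unitob C).

Lemma ms_pass (A B D X : Ob C) :
  middle_swap A B D X = assoc_inv A D (tens B X) \o (tensm (idm A) (pass B D X) \o assoc A B (tens D X)).
Proof. unfold middle_swap, pass. rewrite !comp_assoc. reflexivity. Qed.

Lemma pV6 {A B D E W : Ob C} (x : Hom W _) :
  assoc_inv A B (tens D E) \o (tensm (idm A) (assoc B D E) \o (assoc A (tens B D) E \o x))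
  = assoc (tens A B) D E \o (tensm (assoc_inv A B D) (idm E) \o x).
Proof. rewrite <- pV1. cx2. reflexivity. Qed.

Lemma PR {B D E M W : Ob C} (x : Hom W _) :
  tensm (idm D) (assoc B E M) \o (assoc D (tens B E) M \o (tensm (pass B D E) (idm M) \o x))
  = pass B D (tens E M) \o (tensm (idm B) (assoc D E M) \o (assoc B (tens D E) M \o x)).
Proof.
  rewrite !pass_def. rewrite !tl_comp. nm.
  rewrite <- pent_x. rewrite a_nat. rewrite tens_id. rewrite pV6. reflexivity.
Qed.

Lemma PR0 {B D E M : Ob C} :
  tensm (idm D) (assoc B E M) \o (assoc D (tens B E) M \o tensm (pass B D E) (idm M))
  = pass B D (tens E M) \o (tensm (idm B) (assoc D E M) \o assoc B (tens D E) M).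
Proof. apply add_id. nm. apply PR. Qed.

Lemma CMS {A B D E M W : Ob C} (x : Hom W _) :
  tensm (idm (tens A D)) (assoc B E M) \o (assoc (tens A D) (tens B E) M \o (tensm (middle_swap A B D E) (idm M) \o x))
  = middle_swap A B D (tens E M) \o (tensm (idm (tens A B)) (assoc D E M) \o (assoc (tens A B) (tens D E) M \o x)).
Proof.
  rewrite !ms_pass. rewrite !tl_comp. nm.
  rewrite <- (tens_id A B). rewrite a_nat. rewrite pent_x.
  rewrite <- (pV6 (A:=A) (B:=D) (D:=tens B E) (E:=M)).
  rewrite <- (tens_id A D). rewrite <- ai_nat. rewrite a_nat.
  rewrite (tc_r (tensm (pass B D E) (idm M))). rewrite tc_r. rewrite PR0.
  rewrite !tr_comp. nm. reflexivity.
Qed.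
End C1.

Section C2.
Context {C : SymMonCat} {H : Ob C} (hs : HopfMonoid H).
Local Notation "g \o f" := (comp g f) (at level 40, left associativity).
Local Notation I := (@unitob C).
Local Notation "⟪ f ⟫" := (tensm (idm H) f).
Local Notation m := (mul hs).
Local Notation η := (unt hs).
Local Notation Δ := (comul hs).
Local Notation ε := (counit hs).
Local Notation S := (antipode hs).

Lemma pV5 {A B D E W : Ob C} (x : Hom W _) :
  tensm (assoc A B D) (idm E) \o (assoc_inv (tens A B) D E \o (assoc_inv A B (tens D E) \o x))
  = assoc_inv A (tens B D) E \o (tensm (idm A) (assoc_inv B D E) \o x).
Proof.
  apply (@cancel_l C _ _ _ _ _ (assoc A (tens B D) E) (assoc_inv A (tens B D) E)).
  { apply assoc_iso1. }
  rewrite pV2. cx2. reflexivity.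
Qed.

Lemma W_assoc {M W : Ob C} (x : Hom W _) :
  mrg m M \o (⟪mrg m M⟫ \o x) = mrg m M \o (mrg m (tens H M) \o x).
Proof.
  unfold mrg. rewrite tr_comp. nm. rewrite ai_nat.
  rewrite <- (tens_id H M). rewrite (ai_nat m). rewrite (tc_l (tensm m (idm H))).
  rewrite mul_assoc, !tl_comp. nm. rewrite pV5. reflexivity.
Qed.

Lemma K1'_x {A B W : Ob C} (x : Hom W _) : tensm (lu A) (idm B) \o (assoc_inv I A B \o x) = lu (tens A B) \o x.
Proof. rewrite <- K1. nm. cx2. reflexivity. Qed.

Lemma W_unitl {M W : Ob C} (x : Hom W _) : mrg m M \o (pt η (tens H M) \o x) = x.
Proof.
  unfold mrg, pt. nm. rewrite <- (tens_id H M). rewrite ai_nat. rewrite tc_l, mul_unitl.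
  rewrite K1'_x. cx2. reflexivity.
Qed.
Lemma W_unitr {M W : Ob C} (x : Hom W _) : mrg m M \o (⟪pt η M⟫ \o x) = x.
Proof.
  unfold mrg, pt. rewrite tr_comp. nm. rewrite ai_nat. rewrite tc_l, mul_unitr.
  rewrite tri_inv_x. cx2. reflexivity.
Qed.
Lemma coassoc' : tensm Δ (idm H) \o Δ = assoc_inv H H H \o (tensm (idm H) Δ \o Δ).
Proof.
  apply (@cancel_l C _ _ _ _ _ (assoc H H H) (assoc_inv H H H)). { apply assoc_iso1. }
  rewrite comp_assoc, comul_coassoc. apply add_id. nm. cx2. reflexivity.
Qed.

Lemma W_coassoc {M W : Ob C} (x : Hom W _) :
  ⟪spl Δ M⟫ \o (spl Δ M \o x) = spl Δ (tens H M) \o (spl Δ M \o x).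
Proof.
  symmetry. unfold spl. rewrite tr_comp. nm.
  rewrite <- (tens_id H M). rewrite <- a_nat. rewrite tc_l. rewrite coassoc'. rewrite !tl_comp. nm.
  rewrite pV1. rewrite a_nat. reflexivity.
Qed.

Lemma W_counitl {M W : Ob C} (x : Hom W _) : cpt ε (tens H M) \o (spl Δ M \o x) = x.
Proof.
  unfold cpt, spl. nm. rewrite <- (tens_id H M). rewrite <- a_nat. rewrite K1_x.
  rewrite !tc_l. rewrite comul_counitl, tens_id, comp_idl. reflexivity.
Qed.
Lemma W_counitr {M W : Ob C} (x : Hom W _) : ⟪cpt ε M⟫ \o (spl Δ M \o x) = x.
Proof.
  unfold cpt, spl. rewrite tr_comp. nm. rewrite <- a_nat. rewrite tri_x.
  rewrite !tc_l. rewrite comul_counitr, tens_id, comp_idl. reflexivity.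
Qed.

Lemma CMS' {A B D E M W : Ob C} (x : Hom W _) :
  assoc (tens A D) (tens B E) M \o (tensm (middle_swap A B D E) (idm M) \o x)
  = tensm (idm (tens A D)) (assoc_inv B E M) \o (middle_swap A B D (tens E M) \o (tensm (idm (tens A B)) (assoc D E M) \o (assoc (tens A B) (tens D E) M \o x))).
Proof. rewrite <- CMS. cx2. reflexivity. Qed.

Lemma W_bialg {M W : Ob C} (x : Hom W _) :
  spl Δ M \o (mrg m M \o x) = ⟪mrg m M⟫ \o (mrg m (tens H (tens H M)) \o (⟪sw (tens H M)⟫ \o
     (spl Δ (tens H (tens H M)) \o (⟪spl Δ M⟫ \o x)))).
Proof.
  unfold spl, mrg, sw. nm. rewrite tc_l. rewrite bialg_mul. rewrite !tl_comp. nm.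
  rewrite a_nat. rewrite CMS'. rewrite a_nat. cx2.
  rewrite !tr_comp. nm.
  rewrite (xch Δ (assoc H H M)). rewrite (tc (idm H) Δ (tensm Δ (idm M)) (idm _)), comp_idr, comp_idl.
  rewrite <- (xch m (assoc_inv H H M)).
  rewrite <- (xch m (tensm m (idm M))). rewrite (tc (idm (tens H H)) m (tensm m (idm M)) (idm _)), comp_idr, comp_idl.
  rewrite ms_pass. nm. reflexivity.
Qed.
Lemma W_counit_mul {M W : Ob C} (x : Hom W _) :
  cpt ε M \o (mrg m M \o x) = cpt ε M \o (cpt ε (tens H M) \o x).
Proof.
  unfold cpt, mrg. nm. rewrite tc_l, bialg_counit_mul, tl_comp. nm.
  rewrite <- lu_nat_x. rewrite (tc ε (idm I) (idm _) (tensm ε (idm M))), comp_idr, comp_idl.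
  rewrite <- ai_nat. rewrite K1'_x. reflexivity.
Qed.
Lemma W_unit_comul {M W : Ob C} (x : Hom W _) :
  spl Δ M \o (pt η M \o x) = pt η (tens H M) \o (pt η M \o x).
Proof.
  unfold spl, pt. nm. rewrite tc_l, bialg_comul_unit, tl_comp. nm.
  rewrite a_nat. rewrite K1inv_x. rewrite (lui_nat (tensm η (idm M))).
  rewrite (tc (idm I) η (tensm η (idm M)) (idm _)), comp_idr, comp_idl. reflexivity.
Qed.
Lemma W_counit_unit {M W : Ob C} (x : Hom W _) : cpt ε M \o (pt η M \o x) = x.
Proof.
  unfold cpt, pt. nm. rewrite tc_l, bialg_counit_unit, tens_id, comp_idl. cx2. reflexivity.
Qed.
Lemma W_antl {M W : Ob C} (x : Hom W _) :
  mrg m M \o (one S (tens H M) \o (spl Δ M \o x)) = pt η M \o (cpt ε M \o x).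
Proof.
  unfold mrg, one, spl, pt, cpt. nm. rewrite <- (tens_id H M). rewrite ai_nat. cx2.
  rewrite !tc_l, antipode_l. reflexivity.
Qed.
Lemma W_antr {M W : Ob C} (x : Hom W _) :
  mrg m M \o (⟪one S M⟫ \o (spl Δ M \o x)) = pt η M \o (cpt ε M \o x).
Proof.
  unfold mrg, one, spl, pt, cpt. nm. rewrite ai_nat. cx2.
  rewrite !tc_l, antipode_r. reflexivity.
Qed.
End C2.

Section D.
Context {C : SymMonCat} {H : Ob C} (hs : HopfMonoid H) (p : Hom unitob H).
Local Notation "g \o f" := (comp g f) (at level 40, left associativity).
Local Notation I := (@unitob C).
Local Notation "⟪ f ⟫" := (tensm (idm H) f).
Local Notation m := (mul hs).
Local Notation η := (unt hs).
Local Notation Δ := (comul hs).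
Local Notation ε := (counit hs).
Local Notation S := (antipode hs).

Lemma mg1 {A B A' B' W : Ob C} (g : Hom A B) (f : Hom A' B') (x : Hom W _) :
  tensm g (idm _) \o (tensm (idm _) f \o x) = tensm g f \o x.
Proof. rewrite tc, comp_idl, comp_idr. reflexivity. Qed.
Lemma mg2 {A B A' B' W : Ob C} (g : Hom A B) (f : Hom A' B') (x : Hom W _) :
  tensm (idm _) f \o (tensm g (idm _) \o x) = tensm g f \o x.
Proof. rewrite tc, comp_idl, comp_idr. reflexivity. Qed.

Lemma K1inv2_x {A B W : Ob C} (x : Hom W _) :
  assoc_inv I A B \o (lu_inv (tens A B) \o x) = tensm (lu_inv A) (idm B) \o x.
Proof. rewrite <- K1inv_x. cx2. reflexivity. Qed.

Lemma T_world M : one (Tmap hs p) M = mrg m M \o (pt p (tens H M) \o one S M).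
Proof.
  unfold Tmap, one, mrg, pt. apply add_id. nm. rewrite !tl_comp. nm.
  rewrite (lui_nat (tensm S (idm M))).
  rewrite mg1.
  rewrite ai_nat. rewrite K1inv2_x. reflexivity.
Qed.

Hypothesis piv : is_pivotal hs p.

Lemma P_grp {M W : Ob C} (x : Hom W _) :
  spl Δ M \o (pt p M \o x) = pt p (tens H M) \o (pt p M \o x).
Proof.
  destruct piv as [Hg _].
  unfold spl, pt. nm. rewrite tc_l, Hg, tl_comp. nm.
  rewrite a_nat. rewrite K1inv_x. rewrite (lui_nat (tensm p (idm M))). rewrite mg1. reflexivity.
Qed.
Lemma P_eps {M W : Ob C} (x : Hom W _) : cpt ε M \o (pt p M \o x) = x.
Proof.
  destruct piv as [_ [He _]].
  unfold cpt, pt. nm. rewrite tc_l, He, tens_id, comp_idl. cx2. reflexivity.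
Qed.

Lemma P_piv {M W : Ob C} (x : Hom W _) :
  mrg m M \o (⟪one S M⟫ \o (⟪pt p M⟫ \o (mrg m M \o (pt p (tens H M) \o (one S M \o (one S M \o x)))))) = x.
Proof.
  destruct piv as [_ [_ Hp]].
  unfold mrg, one, pt. rewrite !tr_comp. nm.
  rewrite <- (xch m (lu_inv M)). rewrite <- (xch m (tensm p (idm M))). rewrite <- (xch m (tensm S (idm M))).
  rewrite <- (tens_id H M). rewrite (ai_nat m). rewrite (ai_nat (idm _) S). rewrite (ai_nat (idm _) p).
  rewrite tri_inv_x. rewrite (ai_nat p). rewrite K1inv2_x.
  rewrite !tc_l.
  match goal with |- tensm ?G (idm M) \o x = x => 
    assert (EQ : G = m \o tensm m (idm H) \o tensm ⟪ S \o S ⟫ S \o tensm (tensm p (idm H)) p \o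
    tensm (lu_inv H) (idm I) \o ru_inv H) end.
  { apply add_id. nm. do 4 rewrite rui_nat.
    rewrite (tsplit (⟪S \o S⟫) S), (tsplit (tensm p (idm H)) p). nm.
    repeat (rewrite <- (xch _ S) || rewrite <- (xch _ p)).
    rewrite !tc_l. rewrite <- !comp_assoc.
    assert (L0 : ⟪S \o S⟫ \o (tensm p (idm H) \o lu_inv H) = tensm p (idm H) \o (lu_inv H \o (S \o S))).
    { apply add_id. nm. rewrite <- xch.
      rewrite !lui_nat, tr_comp. nm. reflexivity. }
    rewrite L0. reflexivity. }
  rewrite EQ, Hp, tens_id, comp_idl. reflexivity.
Qed.
End D.

Section E.
Context {C : SymMonCat} {H : Ob C} (hs : HopfMonoid H).
Local Notation "g \o f" := (comp g f) (at level 40, left associativity).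
Local Notation I := (@unitob C).
Local Notation "⟪ f ⟫" := (tensm (idm H) f).
Local Notation m := (mul hs).
Local Notation η := (unt hs).
Local Notation Δ := (comul hs).
Local Notation ε := (counit hs).
Local Notation S := (antipode hs).

Opaque mrg spl one pt cpt sw pass.
Ltac wkn n l := lazymatch n with Datatypes.O => l | Datatypes.S ?k => let l' := wkn k l in constr:(tensm (idm H) l') end.
Ltac liftE E n h :=
  let t := type of E in
  lazymatch t with @eq (@Hom _ ?A ?B) ?l ?r =>
    let l' := wkn n l in let r' := wkn n r in
    let A' := lazymatch type of l' with @Hom _ ?X _ => X end in
    assert (h : forall W (x : Hom W A'), comp l' x = comp r' x) by (intros; rewrite E; reflexivity);
    repeat setoid_rewrite tr_comp in h; repeat setoid_rewrite <- comp_assoc in h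
  end.
Ltac drw L n := let E := fresh "E" in let h := fresh "h" in
  pose proof L as E; rewrite ?comp_idr in E; liftE E n h; rewrite h; clear E h; rewrite ?tens_id, ?comp_idl.
Ltac drwr L n := let E := fresh "E" in let h := fresh "h" in
  pose proof L as E; rewrite ?comp_idr in E; liftE E n h; rewrite <- h; clear E h; rewrite ?tens_id, ?comp_idl.

Lemma CA2 {M W : Ob C} (x : Hom W _) :
  ⟪sw (tens H (tens H (tens H M)))⟫ \o (spl Δ (tens H (tens H (tens H (tens H M)))) \o
    (⟪spl Δ (tens H (tens H M))⟫ \o (⟪sw (tens H M)⟫ \o (spl Δ (tens H (tens H M)) \o (⟪spl Δ M⟫ \o x)))))
  = ⟪⟪⟪sw (tens H M)⟫⟫⟫ \o (⟪⟪spl Δ (tens H (tens H M))⟫⟫ \o (⟪⟪⟪spl Δ M⟫⟫⟫ \o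
    (⟪sw (tens H M)⟫ \o (spl Δ (tens H (tens H M)) \o (⟪spl Δ M⟫ \o x))))).
Proof.
  drw (spl_sw Δ (M:=tens H M) (idm _)) 1.
  rewrite <- (spl_nat Δ (spl Δ (tens H M))).
  drwr (W_coassoc hs (M:=M) (idm _)) 1.
  rewrite (spl_nat Δ (⟪sw (tens H M)⟫)). rewrite (spl_nat Δ (sw (tens H (tens H M)))).
  rewrite <- W_coassoc.
  drwr (sw_nat (H:=H) (spl Δ M) (idm _)) 1.
  drw (spl_sw_r Δ (M:=tens H (tens H M)) (idm _)) 1.
  drw (spl_nat Δ (⟪spl Δ M⟫) (idm _)) 1.
  drwr (spl_nat Δ (⟪spl Δ M⟫) (idm _)) 1.
  rewrite <- (spl_nat Δ (⟪spl Δ M⟫)).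
  drw (sw_nat (H:=H) (sw (H:=H) (tens H M)) (idm _)) 1.
  reflexivity.
Qed.

Definition D2 M : Hom (tens H (tens H M)) (tens H (tens H (tens H (tens H M)))) :=
  ⟪sw (tens H M)⟫ \o (spl Δ (tens H (tens H M)) \o ⟪spl Δ M⟫).
Lemma D2_def M : D2 M = ⟪sw (tens H M)⟫ \o (spl Δ (tens H (tens H M)) \o ⟪spl Δ M⟫).
Proof. reflexivity. Qed.
Opaque D2.

Lemma CA2' {M W : Ob C} (x : Hom W _) :
  D2 (tens H (tens H M)) \o (D2 M \o x) = ⟪⟪D2 M⟫⟫ \o (D2 M \o x).
Proof. rewrite !D2_def. rewrite !tr_comp. nm. apply CA2. Qed.

Definition Fam := forall M : Ob C, Hom (tens H (tens H M)) (tens H M).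
Definition NatF (F : Fam) := forall (M M' : Ob C) (f : Hom M M') W (x : Hom W _),
  F M' \o (⟪⟪f⟫⟫ \o x) = ⟪f⟫ \o (F M \o x).
Definition conv (F G : Fam) : Fam := fun M =>
  mrg m M \o (⟪G M⟫ \o (F (tens H (tens H M)) \o D2 M)).
Definition Uf : Fam := fun M => pt η M \o (cpt ε M \o cpt ε (tens H M)).

Lemma conv_assoc (F G K : Fam) (nF : NatF F) M :
  conv (conv F G) K M = conv F (conv G K) M.
Proof.
  unfold conv. apply add_id. nm. rewrite !tr_comp. nm.
  rewrite <- (nF _ _ (D2 M)). rewrite <- CA2'.
  rewrite <- mrg_nat. rewrite <- W_assoc. reflexivity.
Qed.

Lemma conv_unit_r (F : Fam) (nF : NatF F) M : conv F Uf M = F M.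
Proof.
  unfold conv, Uf. apply add_id. nm. rewrite !tr_comp. nm.
  rewrite W_unitr. rewrite <- !nF. rewrite D2_def. nm.
  drw (sw_cpt2 ε (H:=H) (M:=tens H M) (idm _)) 1.
  rewrite W_counitr. drw (W_counitr hs (M:=M) (idm _)) 1. reflexivity.
Qed.
Lemma conv_unit_l (K : Fam) M : conv Uf K M = K M.
Proof.
  unfold conv, Uf. apply add_id. nm.
  rewrite <- pt_nat. rewrite W_unitl. rewrite D2_def. nm.
  rewrite cpt_nat. rewrite sw_cpt. rewrite W_counitl.
  drw (W_counitl hs (M:=M) (idm _)) 1. reflexivity.
Qed.

Definition Fsm : Fam := fun M => one S M \o mrg m M.
Definition Gm : Fam := fun M => mrg m M.
Definition Ksw : Fam := fun M => mrg m M \o (⟪one S M⟫ \o (one S (tens H M) \o sw M)).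

Lemma nat_Fsm : NatF Fsm.
Proof. unfold NatF, Fsm. intros. nm. rewrite mrg_nat, one_nat. reflexivity. Qed.

Lemma conv_Fsm_Gm M : conv Fsm Gm M = Uf M.
Proof.
  unfold conv, Fsm, Gm, Uf. apply add_id. nm.
  rewrite <- one_nat. rewrite D2_def. nm. rewrite <- W_bialg.
  rewrite W_antl. rewrite W_counit_mul. reflexivity.
Qed.

Lemma conv_Gm_Ksw M : conv Gm Ksw M = Uf M.
Proof.
  unfold conv, Gm, Ksw, Uf. apply add_id. nm. rewrite !tr_comp. nm.
  repeat rewrite <- mrg_nat. rewrite <- W_assoc.
  drw (W_assoc hs (M:=M) (idm _)) 1.
  rewrite D2_def. nm. rewrite spl_nat.
  drwr (spl_sw Δ (H:=H) (M:=M) (idm _)) 1.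
  drwr (one_nat S (one S M) (idm _)) 2.
  drwr (spl_nat Δ (one S M) (idm _)) 1.
  drw (W_antr hs (M:=tens H M) (idm _)) 1.
  drw (W_unitl hs (M:=M) (idm _)) 1.
  drw (cpt_nat ε (one S M) (idm _)) 1.
  drw (sw_cpt ε (H:=H) (M:=M) (idm _)) 1.
  rewrite <- spl_nat. rewrite W_antr. rewrite (cpt_nat ε (cpt ε M)). reflexivity.
Qed.

Lemma conv_ext_r (F G G' : Fam) M : (forall M, G M = G' M) -> conv F G M = conv F G' M.
Proof. intro E. unfold conv. rewrite E. reflexivity. Qed.
Lemma conv_ext_l (F F' G : Fam) M : (forall M, F M = F' M) -> conv F G M = conv F' G M.
Proof. intro E. unfold conv. rewrite E. reflexivity. Qed.

Lemma Fsm_Ksw M : Fsm M = Ksw M.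
Proof.
  rewrite <- (conv_unit_r nat_Fsm M).
  rewrite (@conv_ext_r Fsm Uf (conv Gm Ksw) M) by (intro; symmetry; apply conv_Gm_Ksw).
  rewrite <- conv_assoc by apply nat_Fsm.
  rewrite (@conv_ext_l (conv Fsm Gm) Uf Ksw M) by apply conv_Fsm_Gm.
  apply conv_unit_l.
Qed.

Lemma anti_mul {M W : Ob C} (x : Hom W _) :
  one S M \o (mrg m M \o x) = mrg m M \o (⟪one S M⟫ \o (one S (tens H M) \o (sw M \o x))).
Proof.
  pose proof (Fsm_Ksw M) as E. unfold Fsm, Ksw in E.
  rewrite comp_assoc, E. nm. reflexivity.
Qed.
End E.

Section Op.
Context (C : SymMonCat).
Local Notation "g \o f" := (comp g f) (at level 40, left associativity).
Local Notation I := (@unitob C).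

Lemma ai_nat0 {A B D A' B' D' : Ob C} (f : Hom A A') (g : Hom B B') (h : Hom D D') :
  assoc_inv A' B' D' \o tensm f (tensm g h) = tensm (tensm f g) h \o assoc_inv A B D.
Proof. apply add_id. nm. apply ai_nat. Qed.
Lemma lui_nat0 {A B : Ob C} (f : Hom A B) : lu_inv B \o f = tensm (idm _) f \o lu_inv A.
Proof. apply add_id. nm. apply lui_nat. Qed.
Lemma rui_nat0 {A B : Ob C} (f : Hom A B) : ru_inv B \o f = tensm f (idm _) \o ru_inv A.
Proof. apply add_id. nm. apply rui_nat. Qed.
Lemma pent_inv (A B D E : Ob C) :
  assoc_inv (tens A B) D E \o assoc_inv A B (tens D E)
  = tensm (assoc_inv A B D) (idm E) \o assoc_inv A (tens B D) E \o tensm (idm A) (assoc_inv B D E).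
Proof.
  apply add_id. nm. rewrite <- pV5. cx2. reflexivity.
Qed.
Lemma tri_inv0 (A B : Ob C) :
  assoc_inv A I B \o tensm (idm A) (lu_inv B) = tensm (ru_inv A) (idm B).
Proof. apply add_id. nm. rewrite tri_inv_x. reflexivity. Qed.
Lemma hex_inv (A B D : Ob C) :
  assoc_inv A B D \o sym (tens B D) A \o assoc_inv B D A
  = tensm (sym B A) (idm D) \o assoc_inv B A D \o tensm (idm B) (sym D A).
Proof.
  apply (@cancel_r C _ _ _ _ _ (assoc B D A \o (sym A (tens B D) \o assoc A B D))
                  (assoc_inv A B D \o (sym (tens B D) A \o assoc_inv B D A))).
  { apply add_id. nm. cx2. reflexivity. }
  apply add_id. nm. cx2. rewrite hex_x. cx2. rewrite tc_r, sym_inv, tens_id, comp_idl. cx2.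
  rewrite tc_l, sym_inv, tens_id, comp_idl. reflexivity.
Qed.

Definition Cop : SymMonCat.
Proof.
  refine (@Build_SymMonCat (Ob C) (fun A B => Hom B A) (fun A => idm A)
    (fun A B D g f => comp f g) (@tens C) (fun A B D E f g => tensm f g) (@unitob C)
    (fun A B D => assoc_inv A B D) (fun A B D => assoc A B D)
    (fun A => lu_inv A) (fun A => lu A) (fun A => ru_inv A) (fun A => ru A)
    (fun A B => sym B A) _ _ _ _ _ _ _ _ _ _ _ _ _ _ _ _ _ _ _); cbn; intros.
  - apply comp_idr.
  - apply comp_idl.
  - symmetry. apply comp_assoc.
  - apply tens_id.
  - apply tens_comp.
  - symmetry. apply ai_nat0.
  - apply assoc_iso1.
  - apply assoc_iso2.
  - symmetry. apply lui_nat0.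
  - apply lu_iso1.
  - apply lu_iso2.
  - symmetry. apply rui_nat0.
  - apply ru_iso1.
  - apply ru_iso2.
  - symmetry. apply sym_nat.
  - apply sym_inv.
  - apply pent_inv.
  - apply tri_inv0.
  - apply hex_inv.
Defined.
End Op.

Section OpH.
Context {C : SymMonCat} {H : Ob C} (hs : HopfMonoid H).
Local Notation "g \o f" := (comp g f) (at level 40, left associativity).
Local Notation m := (mul hs).
Local Notation η := (unt hs).
Local Notation Δ := (comul hs).
Local Notation ε := (counit hs).
Local Notation S := (antipode hs).

Lemma ms_op (A B D E : Ob C) : @middle_swap (Cop C) A B D E = middle_swap A D B E.
Proof. unfold middle_swap. cbn. rewrite !comp_assoc. reflexivity. Qed.

Definition hsop : @HopfMonoid (Cop C) H.
Proof.
  refine (@Build_HopfMonoid (Cop C) H Δ ε m η S _ _ _ _ _ _ _ _ _ _ _ _); 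
   try rewrite ms_op; cbn.
  - apply coassoc'.
  - apply (@cancel_l C _ _ _ _ _ (lu H) (lu_inv H)). { apply lu_iso1. }
    rewrite comp_assoc, comul_counitl, lu_iso2. reflexivity.
  - apply (@cancel_l C _ _ _ _ _ (ru H) (ru_inv H)). { apply ru_iso1. }
    rewrite comp_assoc, comul_counitr, ru_iso2. reflexivity.
  - rewrite comp_assoc, mul_assoc. apply add_id. nm. cx2. reflexivity.
  - rewrite comp_assoc, mul_unitl, lu_iso2. reflexivity.
  - rewrite comp_assoc, mul_unitr, ru_iso2. reflexivity.
  - rewrite bialg_mul. rewrite comp_assoc. reflexivity.
  - apply bialg_comul_unit.
  - apply bialg_counit_mul.
  - apply bialg_counit_unit.
  - rewrite comp_assoc. apply antipode_l.
  - rewrite comp_assoc. apply antipode_r.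
Defined.

Lemma anti_comul {M W : Ob C} (x : Hom W _) :
  spl Δ M \o (one S M \o x) = sw M \o (one S (tens H M) \o (tensm (idm H) (one S M) \o (spl Δ M \o x))).
Proof.
  pose proof (anti_mul hsop (M:=M) (idm _)) as E.
  unfold mrg, one, sw, pass in E. cbn in E.
  unfold mrg, one, sw, pass, spl. rewrite !comp_idl in E.
  rewrite <- !comp_assoc in E. rewrite !comp_assoc in E.
  rewrite <- !comp_assoc. rewrite !comp_assoc. rewrite E. reflexivity.
Qed.
End OpH.

Section G.
Context {C : SymMonCat} {H : Ob C} (hs : HopfMonoid H) (p : Hom unitob H) (piv : is_pivotal hs p).
Local Notation "g \o f" := (comp g f) (at level 40, left associativity).
Local Notation I := (@unitob C).
Local Notation "⟪ f ⟫" := (tensm (idm H) f).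
Local Notation m := (mul hs).
Local Notation η := (unt hs).
Local Notation Δ := (comul hs).
Local Notation ε := (counit hs).
Local Notation S := (antipode hs).
Local Notation T := (Tmap hs p).
Opaque mrg spl one pt cpt sw pass.
Ltac wkn n l := lazymatch n with Datatypes.O => l | Datatypes.S ?k => let l' := wkn k l in constr:(tensm (idm H) l') end.
Ltac liftE E n h :=
  let t := type of E in
  lazymatch t with @eq (@Hom _ ?A ?B) ?l ?r =>
    let l' := wkn n l in let r' := wkn n r in
    let A' := lazymatch type of l' with @Hom _ ?X _ => X end in
    assert (h : forall W (x : Hom W A'), comp l' x = comp r' x) by (intros; rewrite E; reflexivity);
    repeat setoid_rewrite tr_comp in h; repeat setoid_rewrite <- comp_assoc in h
  end.
Ltac drw L n := let E := fresh "E" in let h := fresh "h" in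
  pose proof L as E; rewrite ?comp_idr in E; liftE E n h; rewrite h; clear E h; rewrite ?tens_id, ?comp_idl.
Ltac drwr L n := let E := fresh "E" in let h := fresh "h" in
  pose proof L as E; rewrite ?comp_idr in E; liftE E n h; rewrite <- h; clear E h; rewrite ?tens_id, ?comp_idl.


Lemma T_inv {M W : Ob C} (x : Hom W _) : one T M \o (one T M \o x) = x.
Proof.
  rewrite !T_world. nm. rewrite anti_mul. rewrite sw_pt2. rewrite one_nat.
  rewrite pt_nat. rewrite W_assoc. rewrite pt_nat, mrg_nat. rewrite pt_nat, mrg_nat.
  apply P_piv. exact piv.
Qed.

Lemma T_mul {M W : Ob C} (x : Hom W _) :
  one T M \o (mrg m M \o x) = mrg m M \o (⟪one S M⟫ \o (one T (tens H M) \o (sw M \o x))).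
Proof.
  rewrite !T_world. nm. rewrite anti_mul. rewrite pt_nat. rewrite W_assoc.
  rewrite pt_nat, mrg_nat. reflexivity.
Qed.

Lemma R6 {M W : Ob C} (x : Hom W _) :
  one T M \o (mrg m M \o (⟪one T M⟫ \o x)) = mrg m M \o (⟪one S M⟫ \o (sw M \o x)).
Proof.
  rewrite T_mul. rewrite sw_one_r. rewrite T_inv. reflexivity.
Qed.

Lemma R5 {M W : Ob C} (x : Hom W _) :
  spl Δ M \o (one T M \o x) = sw M \o (⟪one T M⟫ \o (one T (tens H M) \o (spl Δ M \o x))).
Proof.
  rewrite sw_one_r, sw_one_l. rewrite !T_world. rewrite !tr_comp. nm.
  rewrite W_bialg. rewrite <- pt_nat. rewrite P_grp by exact piv. rewrite anti_comul.
  rewrite <- sw_one_l. rewrite (one_nat S (mrg m M)). rewrite (one_nat S (pt p (tens H M))).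
  rewrite <- sw_one_r.
  rewrite (pt_nat p (⟪mrg m M⟫)). rewrite (mrg_nat m (mrg m M)).
  rewrite <- (pt_nat p (sw (H:=H) (tens H M))). rewrite sw_pt2.
  rewrite (one_nat S (one S M)). reflexivity.
Qed.
End G.

Section HH.
Context {C : SymMonCat} {H : Ob C} (hs : HopfMonoid H) (p : Hom unitob H) (piv : is_pivotal hs p).
Local Notation "g \o f" := (comp g f) (at level 40, left associativity).
Local Notation I := (@unitob C).
Local Notation "⟪ f ⟫" := (tensm (idm H) f).
Local Notation m := (mul hs).
Local Notation η := (unt hs).
Local Notation Δ := (comul hs).
Local Notation ε := (counit hs).
Local Notation S := (antipode hs).
Local Notation T := (Tmap hs p).
Opaque mrg spl one pt cpt sw pass.
Ltac wkn n l := lazymatch n with Datatypes.O => l | Datatypes.S ?k => let l' := wkn k l in constr:(tensm (idm H) l') end.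
Ltac mkchain n l x := lazymatch l with
  | @comp _ _ _ _ ?a ?b => let r := mkchain n b x in let a' := wkn n a in constr:(comp a' r)
  | _ => let l' := wkn n l in constr:(comp l' x) end.
Ltac liftE E n h :=
  let t := type of E in
  lazymatch t with @eq (@Hom _ ?A ?B) ?l ?r =>
    let l0 := wkn n l in let r0 := wkn n r in
    let A' := lazymatch type of l0 with @Hom _ ?X _ => X end in
    let W := fresh "W" in let x := fresh "x" in
    assert (h : forall (W : Ob C) (x : Hom W A'),
       ltac:(let L := mkchain n l x in let R := mkchain n r x in exact (L = R)));
    [ let E' := fresh in intros W x; assert (E' : l0 = r0) by (rewrite E; reflexivity);
      rewrite ?tr_comp in E'; rewrite ?comp_assoc in E'; rewrite ?comp_assoc; rewrite E'; reflexivity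
    | ]
  end.
Ltac drw L n := let E := fresh "E" in let h := fresh "h" in
  pose proof L as E; rewrite ?comp_idr in E; liftE E n h; rewrite h; clear E h; rewrite ?tens_id, ?comp_idl.
Ltac drwr L n := let E := fresh "E" in let h := fresh "h" in
  pose proof L as E; rewrite ?comp_idr in E; liftE E n h; rewrite <- h; clear E h; rewrite ?tens_id, ?comp_idl.

Definition WHM (Mod : Ob C) (act : Hom (tens H Mod) Mod) (coact : Hom Mod (tens H Mod)) : Prop :=
 (forall W (x : Hom W _), act \o (mrg m Mod \o x) = act \o (⟪act⟫ \o x)) /\
 (forall W (x : Hom W _), act \o (pt η Mod \o x) = x) /\
 (forall W (x : Hom W _), spl Δ Mod \o (coact \o x) = ⟪coact⟫ \o (coact \o x)) /\
 (forall W (x : Hom W _), cpt ε Mod \o (coact \o x) = x) /\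
 (forall W (x : Hom W _), coact \o (act \o x) =
     ⟪act⟫ \o (mrg m (tens H Mod) \o (⟪sw Mod⟫ \o (spl Δ (tens H Mod) \o (⟪coact⟫ \o x))))).

Lemma WHM_plus (N : Ob C) : WHM (tens H N) (mrg m N) (spl Δ N).
Proof.
  split; [|split; [|split; [|split]]]; intros.
  - rewrite W_assoc. reflexivity.
  - apply W_unitl.
  - rewrite W_coassoc. reflexivity.
  - apply W_counitl.
  - rewrite W_bialg. rewrite spl_nat. reflexivity.
Qed.

Lemma WHM_minus (N : Ob C) :
  WHM (tens H N) (one T N \o (mrg m N \o ⟪one T N⟫)) (⟪one T N⟫ \o (spl Δ N \o one T N)).
Proof.
  split; [|split; [|split; [|split]]]; intros; nm.
  - rewrite !tr_comp. nm. drw (T_inv piv (M:=N) (idm _)) 1.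
    rewrite <- mrg_nat. rewrite <- W_assoc. reflexivity.
  - rewrite <- pt_nat. rewrite W_unitl. apply T_inv; exact piv.
  - rewrite !tr_comp. nm. drw (T_inv piv (M:=N) (idm _)) 1.
    rewrite spl_nat. rewrite W_coassoc. reflexivity.
  - rewrite cpt_nat. rewrite W_counitl. apply T_inv; exact piv.
  - rewrite T_inv by exact piv. rewrite W_bialg. rewrite !tr_comp. nm.
    rewrite (spl_nat Δ (⟪one T N⟫)). drw (sw_nat (H:=H) (one T N) (idm _)) 1.
    rewrite (mrg_nat m (⟪one T N⟫)).
    drw (T_inv piv (M:=N) (idm _)) 2. reflexivity.
Qed.

Lemma sw_spl c {M W : Ob C} (x : Hom W _) :
  sw (H:=H) (tens H M) \o (⟪spl c M⟫ \o x) = ⟪sw M⟫ \o (spl c (tens H M) \o (sw M \o x)).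
Proof. rewrite spl_sw. rewrite w_sw_inv. reflexivity. Qed.

Lemma WHM_lift (Mod : Ob C) act coact : WHM Mod act coact ->
  WHM (tens H Mod) (⟪act⟫ \o sw Mod) (sw Mod \o ⟪coact⟫).
Proof.
  intros [H1 [H2 [H3 [H4 H5]]]].
  split; [|split; [|split; [|split]]]; intros; nm.
  - rewrite sw_mrg. drw (H1 _ (idm _)) 1. rewrite !tr_comp. nm. rewrite sw_nat. reflexivity.
  - rewrite sw_pt2. drw (H2 _ (idm _)) 1. reflexivity.
  - rewrite spl_sw. drw (H3 _ (idm _)) 1. rewrite !tr_comp. nm. rewrite sw_nat. reflexivity.
  - rewrite sw_cpt. drw (H4 _ (idm _)) 1. reflexivity.
  - drw (H5 _ (idm _)) 1. rewrite !tr_comp. nm.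
    rewrite (sw_nat (H:=H) act). rewrite sw_mrg_r. rewrite (sw_nat (H:=H) (sw (H:=H) Mod)).
    rewrite sw_spl. rewrite (sw_nat (H:=H) coact). rewrite sw_inv.
    rewrite <- (mrg_nat m (sw (H:=H) Mod)). rewrite (spl_nat Δ (sw (H:=H) Mod)).
    drw (sw_YB (H:=H) (M:=Mod) (idm _)) 1. reflexivity.
Qed.

Definition Q1 (Mod : Ob C) (a1 a2 : Hom (tens H Mod) Mod) : Prop :=
  forall W (x : Hom W _), a1 \o (⟪a2⟫ \o x) = a2 \o (⟪a1⟫ \o (sw Mod \o x)).
Definition Q2 (Mod : Ob C) (c1 c2 : Hom Mod (tens H Mod)) : Prop :=
  forall W (x : Hom W _), ⟪c1⟫ \o (c2 \o x) = sw Mod \o (⟪c2⟫ \o (c1 \o x)).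

Lemma Q1_base (N : Ob C) : Q1 (tens H N) (one T N \o (mrg m N \o ⟪one T N⟫)) (mrg m N).
Proof.
  intros W x. nm. rewrite (R6 piv). rewrite sw_mrg_r. rewrite <- (mrg_nat m (one S N)).
  rewrite <- W_assoc. rewrite !tr_comp. nm. 
  drw (R6 piv (M:=N) (idm _)) 1. reflexivity.
Qed.

Lemma Q2_base (N : Ob C) : Q2 (tens H N) (⟪one T N⟫ \o (spl Δ N \o one T N)) (spl Δ N).
Proof.
  intros W x. rewrite !tr_comp. nm.
  drw (R5 piv (M:=N) (idm _)) 1.
  drwr (sw_one_l (Tmap hs p) (H:=H) (M:=N) (idm _)) 1.
  drw (one_nat (Tmap hs p) (one T N) (idm _)) 1.
  drw (T_inv piv (M:=tens H N) (idm _)) 1.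
  rewrite (R5 piv). rewrite <- sw_one_l. rewrite (one_nat (Tmap hs p) (one T N)).
  rewrite (T_inv piv). rewrite spl_sw_r. rewrite sw_inv. rewrite spl_nat.
  rewrite W_coassoc. reflexivity.
Qed.

Lemma Q1_lift (Mod : Ob C) a1 a2 : Q1 Mod a1 a2 -> Q1 (tens H Mod) (⟪a1⟫ \o sw Mod) (⟪a2⟫ \o sw Mod).
Proof.
  intros HQ W x. rewrite !tr_comp. nm. rewrite !sw_nat. drw (HQ _ (idm _)) 1.
  rewrite ?tr_comp. nm. rewrite ?sw_YB. reflexivity.
Qed.
Lemma Q2_lift (Mod : Ob C) c1 c2 : Q2 Mod c1 c2 -> Q2 (tens H Mod) (sw Mod \o ⟪c1⟫) (sw Mod \o ⟪c2⟫).
Proof.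
  intros HQ W x. rewrite !tr_comp. nm. rewrite <- !sw_nat. drw (HQ _ (idm _)) 1.
  rewrite ?tr_comp. nm. rewrite ?sw_YB. reflexivity.
Qed.
End HH.

Section Z.
Context {C : SymMonCat} {H : Ob C} (hs : HopfMonoid H) (p : Hom unitob H) (piv : is_pivotal hs p).
Local Notation "g \o f" := (comp g f) (at level 40, left associativity).
Local Notation I := (@unitob C).
Local Notation "⟪ f ⟫" := (tensm (idm H) f).
Local Notation m := (mul hs).
Local Notation η := (unt hs).
Local Notation Δ := (comul hs).
Local Notation ε := (counit hs).
Local Notation Sa := (antipode hs).
Local Notation T := (Tmap hs p).

Lemma WHM_hopf (Mod : Ob C) act coact : WHM hs Mod act coact -> is_hopf_module hs act coact.
Proof.
  intros [H1 [H2 [H3 [H4 H5]]]].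
  split; [|split; [|split; [|split]]].
  - pose proof (H1 _ (assoc H H Mod)) as E. unfold mrg in E. nm. rewrite <- !comp_assoc in E. rewrite assoc_iso1, comp_idr in E. rewrite E. reflexivity.
  - pose proof (H2 _ (lu Mod)) as E. unfold pt in E. rewrite <- !comp_assoc in E. rewrite lu_iso1, comp_idr in E. exact E.
  - apply (@cancel_l C _ _ _ _ _ (assoc H H Mod) (assoc_inv H H Mod)). { apply assoc_iso1. }
    pose proof (H3 _ (idm _)) as E. unfold spl in E. rewrite !comp_idr in E. nm. rewrite a_ai.
    rewrite <- comp_assoc in E. exact E.
  - apply (@cancel_l C _ _ _ _ _ (lu Mod) (lu_inv Mod)). { apply lu_iso1. }
    pose proof (H4 _ (idm _)) as E. unfold cpt in E. rewrite !comp_idr in E.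
    rewrite lu_iso2. rewrite <- comp_assoc in E. exact E.
  - pose proof (H5 _ (idm _)) as E. rewrite !comp_idr in E. rewrite E.
    rewrite ms_pass. unfold mrg, sw, spl. 
    rewrite (tsplit Δ coact). rewrite <- (comp_idl m), <- (comp_idr act), tens_comp, comp_idl, comp_idr.
    apply add_id. nm. reflexivity.
Qed.

Lemma act_S0 g n : act_at hs g (S n) 0 = tensm g (idm _) \o assoc_inv H H (@Hpow C H n).
Proof. reflexivity. Qed.
Lemma act_SS g n k : act_at hs g (S n) (S k) = ⟪act_at hs g n k⟫ \o sw (@Hpow C H n).
Proof. cbn [act_at]. unfold sw, pass. rewrite !comp_assoc. reflexivity. Qed.
Lemma coact_S0 c n : coact_at hs c (S n) 0 = assoc H H (@Hpow C H n) \o tensm c (idm _).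
Proof. reflexivity. Qed.
Lemma coact_SS c n k : coact_at hs c (S n) (S k) = sw (@Hpow C H n) \o ⟪coact_at hs c n k⟫.
Proof. cbn [coact_at]. unfold sw, pass. rewrite !comp_assoc. reflexivity. Qed.

Lemma main_world n : forall k, k < n ->
  WHM hs (@Hpow C H n) (act_plus hs n k) (coact_plus hs n k) /\
  WHM hs (@Hpow C H n) (act_minus hs p n k) (coact_minus hs p n k) /\
  Q1 (@Hpow C H n) (act_minus hs p n k) (act_plus hs n k) /\
  Q2 (@Hpow C H n) (coact_minus hs p n k) (coact_plus hs n k).
Proof.
  induction n as [|n IH]; intros k Hk.
  - exfalso. inversion Hk.
  - destruct k as [|k].
    + unfold act_plus, act_minus, coact_plus, coact_minus.
      rewrite !act_S0, !coact_S0.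
      assert (Ea : tensm m (idm (@Hpow C H n)) \o assoc_inv H H (@Hpow C H n) = mrg m (@Hpow C H n)) by reflexivity.
      assert (Ec : assoc H H (@Hpow C H n) \o tensm Δ (idm (@Hpow C H n)) = spl Δ (@Hpow C H n)) by reflexivity.
      assert (Ea' : tensm (T \o m \o tensm (idm H) T) (idm (@Hpow C H n)) \o assoc_inv H H (@Hpow C H n)
                    = one T (@Hpow C H n) \o (mrg m (@Hpow C H n) \o ⟪one T (@Hpow C H n)⟫)).
      { unfold one, mrg. apply add_id. nm. rewrite !tl_comp. nm. rewrite ai_nat. reflexivity. }
      assert (Ec' : assoc H H (@Hpow C H n) \o tensm (tensm (idm H) T \o Δ \o T) (idm (@Hpow C H n))
                    = ⟪one T (@Hpow C H n)⟫ \o (spl Δ (@Hpow C H n) \o one T (@Hpow C H n))).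
      { unfold one, spl. apply add_id. nm. rewrite !tl_comp. nm. rewrite <- (tens_id H (@Hpow C H n)).
        rewrite a_nat. reflexivity. }
      rewrite Ea, Ec, Ea', Ec'.
      split; [apply WHM_plus|split; [apply WHM_minus; exact piv|split]].
      * apply Q1_base; exact piv.
      * apply Q2_base; exact piv.
    + assert (Hk2 : k < n) by lia.
      destruct (IH k Hk2) as [A1 [A2 [A3 A4]]].
      unfold act_plus, act_minus, coact_plus, coact_minus in *.
      rewrite !act_SS, !coact_SS.
      split; [apply WHM_lift; exact A1|split; [apply WHM_lift; exact A2|split]].
      * apply Q1_lift; exact A3.
      * apply Q2_lift; exact A4.
Qed.
End Z.

Theorem lemma5p2 (C : SymMonCat) (H : Ob C) (hs : HopfMonoid H)
    (p : Hom unitob H) (n k : nat) :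
  is_pivotal hs p -> k < n ->
  (is_hopf_module hs (act_plus hs n k) (coact_plus hs n k) /\
   is_hopf_module hs (act_minus hs p n k) (coact_minus hs p n k)) /\
  (comp (act_minus hs p n k) (tensm (idm H) (act_plus hs n k))
   = comp (act_plus hs n k)
       (comp (tensm (idm H) (act_minus hs p n k))
          (comp (assoc H H (Hpow n))
             (comp (tensm (sym H H) (idm (Hpow n))) (assoc_inv H H (Hpow n)))))) /\
  (comp (tensm (idm H) (coact_minus hs p n k)) (coact_plus hs n k)
   = comp (assoc H H (Hpow n))
       (comp (tensm (sym H H) (idm (Hpow n)))
          (comp (assoc_inv H H (Hpow n))
             (comp (tensm (idm H) (coact_plus hs n k)) (coact_minus hs p n k))))).
Proof.
  intros piv Hk.
  destruct (main_world piv Hk) as [A1 [A2 [A3 A4]]].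
  split; [split; apply WHM_hopf; assumption | split].
  - pose proof (A3 _ (idm _)) as E. rewrite !comp_idr in E. unfold sw, pass in E. exact E.
  - pose proof (A4 _ (idm _)) as E. rewrite !comp_idr in E. unfold sw, pass in E.
    rewrite <- !comp_assoc in E. exact E.
Qed.
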